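(* Consider the SRLOD model on a finite connected graph $G$ with $N\ge2$ agents, learning rate $\alpha\in(0,1)$, exploration rate $\epsilon\in(0,1)$, and Q-values in $[-1,1]$. Suppose that at some time $t_0\in\mathbb{N}$ there is an opinion $o\in\{-1,1\}$ with $q^i_o(t_0)>q^i_{-o}(t_0)$ for every agent $i\in\{1,\dots,N\}$. Then $$\mathbb{P}\big(q^i_o(t)>q^i_{-o}(t)\ \ \forall i\in\{1,\dots,N\},\ \forall t\ge t_0\big)=0,$$ i.e. consensus is almost surely eventually left.
   Context: The SRLOD (symmetric reinforcement learning for opinion dynamics) model: $G=(V,E)$ is a finite simple undirected graph with $V=\{1,\dots,N\}$. Each agent $i$ holds Q-values $q^i_1(t),q^i_{-1}(t)$, initialized in $[-1,1]$; agent $i$'s preferred opinion is the $o$ with $q^i_o(t)\ge q^i_{-o}(t)$ (opinion $1$ in case of a tie). In each discrete round $t$, an edge $(i,j)\in E$ is chosen uniformly at random; independently, each of $i$ and $j$ expresses an opinion $o_i(t),o_j(t)\in\{-1,1\}$, equal to its preferred opinion with probability $1-\epsilon$ and the other opinion with probability $\epsilon$; then both update only the Q-value of the opinion they expressed: $q^i_{o_i(t)}(t+1)=(1-\alpha)q^i_{o_i(t)}(t)+\alpha\,o_i(t)o_j(t)$ and $q^j_{o_j(t)}(t+1)=(1-\alpha)q^j_{o_j(t)}(t)+\alpha\,o_i(t)o_j(t)$. All other Q-values are unchanged. *)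

(* Defs.v *)
From HB Require Import structures.
From mathcomp Require Import all_boot all_order all_algebra.
From mathcomp Require Import all_classical all_reals all_analysis.
Set Implicit Arguments. Unset Strict Implicit. Unset Printing Implicit Defensive.
Import Order.TTheory GRing.Theory Num.Theory.
Local Open Scope ring_scope.

(* Opinions are encoded by booleans: true <-> +1, false <-> -1. *)
Definition sgnb {R : pzRingType} (b : bool) : R := if b then 1 else -1.

Definition qstate (R : Type) (N : nat) := 'I_N -> bool -> R.

(* Preferred opinion: o with q_o >= q_{-o}; ties go to +1 (true). *)
Definition pref {R : realDomainType} {N} (q : qstate R N) (i : 'I_N) : bool :=
  q i false <= q i true.

(* One round's random data: the chosen edge (i, j) and the exploration
   flags of i and j (flag = true means "express the non-preferred opinion",
   which happens with probability eps). *)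
Definition round_choice (N : nat) : Type := ('I_N * 'I_N * bool * bool)%type.

Definition expressed {R : realDomainType} {N} (q : qstate R N) (i : 'I_N)
  (flag : bool) : bool := if flag then ~~ pref q i else pref q i.

Definition srlod_step {R : realDomainType} {N} (alpha : R) (q : qstate R N)
  (c : round_choice N) : qstate R N :=
  let: (i, j, fi, fj) := c in
  let oi := expressed q i fi in
  let oj := expressed q j fj in
  let r : R := sgnb oi * sgnb oj in
  fun k o =>
    if (k == i) && (o == oi) then (1 - alpha) * q i oi + alpha * r
    else if (k == j) && (o == oj) then (1 - alpha) * q j oj + alpha * r
    else q k o.

Fixpoint srlod_traj {R : realDomainType} {N} (alpha : R) (q0 : qstate R N)
  (cs : nat -> round_choice N) (t : nat) : qstate R N :=
  match t with
  | 0 => q0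
  | t'.+1 => srlod_step alpha (srlod_traj alpha q0 cs t') (cs t')
  end.

Definition consensus {R : realDomainType} {N} (o : bool) (q : qstate R N) : Prop :=
  forall i : 'I_N, q i (~~ o) < q i o.

Definition simple_graph {N} (e : rel 'I_N) : Prop :=
  symmetric e /\ irreflexive e.
Definition connected_graph {N} (e : rel 'I_N) : Prop :=
  forall i j : 'I_N, connect e i j.

(* Undirected edges, each represented once as (i, j) with i < j. *)
Definition edge_set {N} (e : rel 'I_N) : {set 'I_N * 'I_N} :=
  [set p : 'I_N * 'I_N | (p.1 < p.2)%N && e p.1 p.2].

Definition choice_prob {R : realFieldType} {N} (e : rel 'I_N) (eps : R)
  (c : round_choice N) : R :=
  let: (i, j, fi, fj) := c in
  (if (i, j) \in edge_set e then (#|edge_set e|%:R)^-1 else 0) *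
  (if fi then eps else 1 - eps) * (if fj then eps else 1 - eps).

(* Main.v *)
Require Import Defs.
From HB Require Import structures.
From mathcomp Require Import all_boot all_order all_algebra.
From mathcomp Require Import all_classical all_reals all_analysis.
From mathcomp Require Import ring lra zify.
Import Order.TTheory GRing.Theory Num.Theory.
Local Open Scope ring_scope.
Local Open Scope classical_set_scope.
Set Implicit Arguments. Unset Strict Implicit.

Lemma pref_cons (R : realType) N (q : qstate R N) o i :
  consensus o q -> pref q i = o.
Proof.
move=> /(_ i); rewrite /pref; case: o => /= h.
  by rewrite ltW.
by rewrite leNgt h.
Qed.

Lemma sgnb_neq (R : realType) (o : bool) : sgnb (~~ o) * sgnb o = - 1 :> R.
Proof. by case: o; rewrite /sgnb /= ?mulN1r ?mulrN1. Qed.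

Lemma sgnb_sq (R : realType) (o : bool) : sgnb o * sgnb o = 1 :> R.
Proof. by case: o; rewrite /sgnb /= ?mulr1 ?mulrNN ?mulr1. Qed.

Lemma sgnb_bnd (R : realType) (a b : bool) :
  sgnb a * sgnb b = 1 :> R \/ sgnb a * sgnb b = -1 :> R.
Proof. by case: a; case: b; rewrite /sgnb ?mulr1 ?mulrN1 ?mulN1r ?opprK; auto. Qed.

Lemma step_bound (R : realType) N (alpha : R) (q : qstate R N) c :
  0 < alpha < 1 -> (forall k b, -1 <= q k b <= 1) ->
  forall k b, -1 <= srlod_step alpha q c k b <= 1.
Proof.
move=> /andP[a0 a1] hq k b.
case: c => [[[i j] fi] fj] /=.
have upd : forall x, -1 <= x <= 1 -> forall r : R, r = 1 \/ r = -1 ->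
   -1 <= (1 - alpha) * x + alpha * r <= 1.
  move=> x /andP[x0 x1] r [->|->]; apply/andP; split; nra.
case: ifP => _; first by apply: upd; [exact: hq| exact: sgnb_bnd].
case: ifP => _; first by apply: upd; [exact: hq| exact: sgnb_bnd].
exact: hq.
Qed.

Lemma traj_bound (R : realType) N (alpha : R) q0 cs :
  0 < alpha < 1 -> (forall k b, -1 <= q0 k b <= 1) ->
  forall t k b, -1 <= @srlod_traj R N alpha q0 cs t k b <= 1.
Proof.
move=> ha hq; elim=> [|t IH] /=; first exact: hq.
exact: step_bound.
Qed.

Lemma block_break (R : realType) N (alpha : R) (q : nat -> qstate R N)
   (i j : 'I_N) o m :
  i != j -> 0 < alpha < 1 -> (forall k b, -1 <= q 0%N k b <= 1) ->
  (1 - alpha) ^+ m < alpha ->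
  q 1%N = srlod_step alpha (q 0%N) (i, j, true, false) ->
  (forall s, (0 < s <= m)%N -> q s.+1 = srlod_step alpha (q s) (i, j, true, true)) ->
  (forall s, (s <= m.+1)%N -> consensus o (q s)) -> False.
Proof.
move=> ij /andP[a0 a1] hq hm h1 hs hc.
have ji : (j == i) = false by rewrite eq_sym (negbTE ij).
have hc0 := hc 0%N isT.
have E1o : q 1%N j o = (1 - alpha) * q 0%N j o - alpha.
  rewrite h1 /= ji /= eqxx /expressed /= !(pref_cons _ hc0) eqxx /=.
  by rewrite sgnb_neq mulrN1.
have E1n : q 1%N j (~~ o) = q 0%N j (~~ o).
  rewrite h1 /= ji /= eqxx /expressed /= !(pref_cons _ hc0).
  by case: o {E1o hc hc0} => /=.
have key : forall s, (s <= m)%N ->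
   q s.+1 j o = q 1%N j o /\ 1 - q s.+1 j (~~ o) <= (1 - alpha) ^+ s * 2.
  elim=> [|s IH] hsm.
    split => //; rewrite expr0 mul1r E1n; have := hq j (~~ o); case/andP=> ? ?; lra.
  have [IH1 IH2] := IH (ltnW hsm).
  have hcs := hc s.+1 (leqW hsm).
  have hst := hs s.+1 hsm.
  rewrite hst /= ji /= eqxx /expressed /= !(pref_cons _ hcs).
  split.
    by rewrite -IH1; case: (o)...
  rewrite eqxx /= sgnb_sq exprS.
  have h0 : 0 <= 1 - alpha by lra.
  have := ler_wpM2l h0 IH2; rewrite mulrA; nra.
have [K1 K2] := key m (leqnn m).
have := hc m.+1 (leqnn _) j; rewrite K1 E1o.
have := hq j o; case/andP => ? ?.
nra.
Qed.

Definition cyl (Omega : Type) (C : Type) (Y : nat -> Omega -> C) (T : nat)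
  (cs : nat -> C) : set Omega := [set w | forall t, (t < T)%N -> Y t w = cs t].

Definition pdep (C : Type) (T : nat) (A : (nat -> C) -> Prop) :=
  forall cs cs', (forall t, (t < T)%N -> cs t = cs' t) -> A cs -> A cs'.

Definition ext (C : Type) (T : nat) (f : {ffun 'I_T -> C}) (d : nat -> C) : nat -> C :=
  fun t => if @insub _ (fun t => (t < T)%N) 'I_T t is Some i then f i else d t.

Lemma ext_lt (C : Type) T (f : {ffun 'I_T -> C}) d (i : 'I_T) : ext f d i = f i.
Proof. by rewrite /ext valK. Qed.

Lemma ext_ge (C : Type) T (f : {ffun 'I_T -> C}) d t : (T <= t)%N -> ext f d t = d t.
Proof. by move=> h; rewrite /ext insubN // -leqNgt. Qed.

Lemma cyl_measurable d (Omega : measurableType d) (C : Type)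
  (Y : nat -> Omega -> C) T cs :
  (forall t c, measurable [set w | Y t w = c]) -> measurable (cyl Y T cs).
Proof.
move=> hY.
have -> : cyl Y T cs = \bigcap_(t in [set t | (t < T)%N]) [set w | Y t w = cs t].
  by apply/seteqP; split => w /= h t ht; apply: h.
by apply: bigcap_measurableType => k _; apply: hY.
Qed.

Lemma pdep_decomp (Omega : Type) (C : finType) (Y : nat -> Omega -> C) T A d :
  pdep T A ->
  [set w | A (fun t => Y t w)] =
  \bigcup_(f in [set f : {ffun 'I_T -> C} | A (ext f d)]) cyl Y T (ext f d).
Proof.
move=> hA; apply/seteqP; split => w /=.
  move=> h; exists [ffun i : 'I_T => Y i w].
    apply: hA h => t ht; by rewrite -[t]/(val (Ordinal ht)) ext_lt ffunE.
  by move=> t ht; rewrite -[t]/(val (Ordinal ht)) ext_lt ffunE.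
move=> [f hf hw]; apply: hA hf => t ht; by rewrite hw.
Qed.

Lemma pdep_triv (Omega : Type) (C : finType) (Y : nat -> Omega -> C) T (D : set {ffun 'I_T -> C}) d :
  trivIset D (fun f => cyl Y T (ext f d)).
Proof.
move=> f g _ _ [w [hf hg]]; apply/ffunP => i.
by rewrite -(ext_lt f d) -(ext_lt g d) -hf ?ltn_ord // hg.
Qed.

Lemma pdep_measurable d (Omega : measurableType d) (C : finType)
  (Y : nat -> Omega -> C) T A (dd : nat -> C) :
  (forall t c, measurable [set w | Y t w = c]) -> pdep T A ->
  measurable [set w | A (fun t => Y t w)].
Proof.
move=> hY hA; rewrite (pdep_decomp Y dd hA).
apply: fin_bigcup_measurable; first exact: finite_finset.
by move=> f _; exact: cyl_measurable.
Qed.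

Lemma pdep_sum (R : realType) d (Omega : measurableType d) (P : probability Omega R)
  (C : finType) (Y : nat -> Omega -> C) T A (dd : nat -> C) (B : set Omega) :
  (forall t c, measurable [set w | Y t w = c]) -> pdep T A -> measurable B ->
  P ([set w | A (fun t => Y t w)] `&` B) =
  (\sum_(f \in [set f : {ffun 'I_T -> C} | A (ext f dd)]) P (cyl Y T (ext f dd) `&` B))%E.
Proof.
move=> hY hA mB; rewrite (pdep_decomp Y dd hA) setI_bigcupl.
apply: measure_fin_bigcup; first exact: finite_finset.
  move=> f g _ _ [w [[hf _] [hg _]]]; apply/ffunP => i.
  by rewrite -(ext_lt f dd) -(ext_lt g dd) -hf ?ltn_ord // hg.
by move=> f _; apply: measurableI => //; exact: cyl_measurable.
Qed.

Lemma prod_split (R : realType) (F : nat -> R) T K :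
  \prod_(t < T + K) F t = \prod_(t < T) F t * \prod_(s < K) F (T + s)%N.
Proof. by rewrite big_split_ord. Qed.

Lemma indep (R : realType) d (Omega : measurableType d) (P : probability Omega R)
  N (e : rel 'I_N) (eps : R) (Y : nat -> Omega -> round_choice N)
  (pat : nat -> round_choice N) T K A :
  (forall t c, measurable [set w | Y t w = c]) ->
  (forall (T : nat) (cs : nat -> round_choice N),
      P [set w | forall t, (t < T)%N -> Y t w = cs t]
      = (\prod_(t < T) choice_prob e eps (cs t))%:E) ->
  pdep T A ->
  P ([set w | A (fun t => Y t w)] `&` [set w | forall s, (s < K)%N -> Y (T + s)%N w = pat s])
  = ((\prod_(s < K) choice_prob e eps (pat s))%:E * P [set w | A (fun t => Y t w)])%E.
Proof.
move=> hY hP hA.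
set dd := fun t => pat (t - T)%N.
have mB : measurable [set w | forall s, (s < K)%N -> Y (T + s)%N w = pat s].
  apply: (@pdep_measurable _ _ _ Y (T + K)%N (fun cs => forall s, (s < K)%N -> cs (T + s)%N = pat s) dd hY).
  move=> cs cs' hc h s hs; rewrite -hc ?h // ltn_add2l //.
rewrite (pdep_sum P dd hY hA mB).
rewrite -[X in (_ * P X)%E]setIT (pdep_sum P dd hY hA measurableT).
rewrite ge0_mule_fsumr; last by move=> f; exact: measure_ge0.
apply: eq_fsbigr => f _; rewrite setIT.
have -> : cyl Y T (ext f dd) `&` [set w | forall s, (s < K)%N -> Y (T + s)%N w = pat s]
   = cyl Y (T + K) (ext f dd).
  apply/seteqP; split => w /=.
    move=> [h1 h2] t ht; case: (ltnP t T) => htT; first exact: h1.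
    rewrite ext_ge // /dd -(subnKC htT) h2 ?addKn // -(ltn_add2l T) subnKC //.
  move=> h; split => [t ht|s hs]; first by apply: h; apply: ltn_addr.
  by rewrite h ?ltn_add2l // ext_ge ?leq_addr // /dd addKn.
rewrite /cyl hP hP (prod_split (fun t => choice_prob e eps (ext f dd t))) -EFinM mulrC; congr (_%:E); congr (_ * _).
by apply: eq_bigr => s _; rewrite ext_ge ?leq_addr // /dd addKn.
Qed.

Lemma exists_pow_lt (R : realType) (r y : R) : 0 <= r < 1 -> 0 < y ->
  exists n : nat, r ^+ n < y.
Proof.
move=> /andP[r0 r1] y0.
have : `|r| < 1 by rewrite ger0_norm.
move=> /cvg_expr /cvgrPdist_lt /(_ y y0) [N _ HN].
exists N; have := HN N (leqnn N); rewrite /= sub0r normrN ger0_norm //.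
exact: exprn_ge0.
Qed.

Lemma traj_ext (R : realType) N (alpha : R) (q0 : qstate R N) cs cs' t :
  (forall s, (s < t)%N -> cs s = cs' s) ->
  srlod_traj alpha q0 cs t = srlod_traj alpha q0 cs' t.
Proof.
elim: t => [|t IH] h //=.
by rewrite IH ?h // => s hs; apply: h; exact: ltnW.
Qed.

Lemma edge_exists N (e : rel 'I_N) : (2 <= N)%N -> simple_graph e -> connected_graph e ->
  exists i j : 'I_N, i != j /\ (i, j) \in edge_set e.
Proof.
move=> hN [hsym hirr] hc.
have h0 : (0 < N)%N by apply: leq_trans hN.
pose a := Ordinal h0; pose b := Ordinal hN.
have /connectP [p hp hl] := hc a b.
case: p hp hl => [|x p] /=.
  by move=> _ /(congr1 val).
move=> /andP[hax _] _.
case: (ltngtP a x) => hx.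
- exists a, x; split; first by rewrite neq_ltn hx.
  by rewrite inE /= hx.
- by move: hx; rewrite /= ltn0.
- have : a = x by apply: val_inj.
  by move=> eax; move: hax; rewrite -eax hirr.
Qed.

Theorem lemma3 (R : realType) (N : nat) (e : rel 'I_N) (alpha eps : R)
  (d : measure_display) (Omega : measurableType d) (P : probability Omega R)
  (Y : nat -> Omega -> round_choice N) (q0 : qstate R N) (o : bool) (t0 : nat) :
  (2 <= N)%N ->
  simple_graph e -> connected_graph e ->
  0 < alpha < 1 -> 0 < eps < 1 ->
  (forall i b, -1 <= q0 i b <= 1) ->
  (forall t c, measurable [set w | Y t w = c]) ->
  (forall (T : nat) (cs : nat -> round_choice N),
      P [set w | forall t, (t < T)%N -> Y t w = cs t]
      = (\prod_(t < T) choice_prob e eps (cs t))%:E) ->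
  P [set w | forall t, (t0 <= t)%N ->
               consensus o (srlod_traj alpha q0 (fun s => Y s w) t)] = 0%E.
Proof.
move=> hN hg hconn ha he hq0 hY hP.
have [i [j [ij hij]]] := edge_exists hN hg hconn.
have [m hm] : exists m : nat, (1 - alpha) ^+ m < alpha.
  case/andP: ha => ? ?; apply: exists_pow_lt => //; apply/andP; split; lra.
set K := m.+1.
pose pat (s : nat) : round_choice N := if s == 0%N then (i, j, true, false) else (i, j, true, true).
pose p := \prod_(s < K) choice_prob e eps (pat s).
have p0 : 0 < p.
  apply: prodr_gt0 => s _; rewrite /pat; case: (_ == _); rewrite /choice_prob hij;
  (case/andP: he => ? ?; apply: mulr_gt0; [apply: mulr_gt0|]; try lra);
  rewrite invr_gt0 ltr0n; apply/card_gt0P; by exists (i, j).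
pose Tn n := (t0 + n * K)%N.
pose Bn n (cs : nat -> round_choice N) := forall s, (s < K)%N -> cs (Tn n + s)%N = pat s.
pose G M (cs : nat -> round_choice N) := forall n, (n < M)%N -> ~ Bn n cs.
have pdG : forall M, pdep (Tn M) (G M).
  move=> M cs cs' hc hG n hn hB; apply: (hG n hn) => s hs.
  rewrite hc ?hB //.
  apply: (@leq_trans (Tn n.+1)); first by rewrite /Tn mulSn; lia.
  by rewrite /Tn leq_add2l leq_mul2r hn orbT.
have dd : nat -> round_choice N := pat.
have mG : forall M, measurable [set w | G M (fun t => Y t w)].
  by move=> M; apply: (pdep_measurable dd hY (pdG M)).
have mB : forall n, measurable [set w | forall s, (s < K)%N -> Y (Tn n + s)%N w = pat s].
  move=> n; apply: (@pdep_measurable _ _ _ Y (Tn n + K)%N (Bn n) dd hY).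
  move=> cs cs' hc h s hs; rewrite -hc ?h // ltn_add2l //.
have hG : forall M, P [set w | G M (fun t => Y t w)] = ((1 - p) ^+ M)%:E.
  elim=> [|M IH].
    rewrite expr0; have -> : [set w | G 0%N (fun t => Y t w)] = setT.
      by apply/seteqP; split => w //= _ n.
    exact: probability_setT.
  have -> : [set w | G M.+1 (fun t => Y t w)] =
     [set w | G M (fun t => Y t w)] `\` [set w | forall s, (s < K)%N -> Y (Tn M + s)%N w = pat s].
    apply/seteqP; split => w /=.
      move=> h; split; first by move=> n hn; apply: h; exact: ltnW.
      by apply: h.
    move=> [h1 h2] n; rewrite ltnS leq_eqVlt => /orP[/eqP ->|hn] //.
    exact: h1.
  rewrite measureD //; last first.
    by apply: (le_lt_trans (probability_le1 P (mG M))); exact: ltry.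
  have hI := indep pat K hY hP (pdG M).
  set b := (X in (_ - X)%E).
  have -> : b = (p%:E * P [set w | G M (fun t => Y t w)])%E by exact: hI.
  set a := (X in (X - _)%E).
  have -> : a = ((1 - p) ^+ M)%:E by exact: IH.
  rewrite IH -EFinM -EFinB; congr (_%:E).
  by rewrite exprS; ring.
pose E := [set w | forall t, (t0 <= t)%N ->
               consensus o (srlod_traj alpha q0 (fun s => Y s w) t)].
have mE : measurable E.
  have -> : E = \bigcap_(t in [set t | (t0 <= t)%N])
      [set w | consensus o (srlod_traj alpha q0 (fun s => Y s w) t)].
    by apply/seteqP; split => w /= h t ht; apply: h.
  apply: bigcap_measurableType => t _.
  apply: (@pdep_measurable _ _ _ Y t (fun cs => consensus o (srlod_traj alpha q0 cs t)) dd hY).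
  by move=> cs cs' hc; rewrite (traj_ext _ _ hc).
have sub : forall M, E `<=` [set w | G M (fun t => Y t w)].
  move=> M w hw n hn hB.
  pose q s := srlod_traj alpha q0 (fun s => Y s w) (Tn n + s)%N.
  apply: (@block_break R N alpha q i j o m ij ha).
  - exact: traj_bound.
  - exact: hm.
  - have h := hB 0%N isT; rewrite addn0 in h.
    transitivity (srlod_step alpha (q 0%N) (Y (Tn n) w)).
      by rewrite /q addn1 addn0.
    by rewrite h.
  - move=> s /andP[s0 sm].
    transitivity (srlod_step alpha (q s) (Y (Tn n + s)%N w)).
      by rewrite /q addnS.
    rewrite hB; last by rewrite /K ltnS.
    by rewrite /pat; case: s s0 {sm}.
  - move=> s _; apply: hw; rewrite /Tn -addnA leq_addr //.
have hle : forall M, (P E <= ((1 - p) ^+ M)%:E)%E.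
  by move=> M; rewrite -hG; apply: le_measure; rewrite ?inE //; apply: sub.
have p1 : 0 <= 1 - p.
  have h1 : (0 <= P [set w | G 1%N (fun t => Y t w)])%E by exact: measure_ge0.
  by move: h1; rewrite hG expr1 lee_fin.
have hE0 : (0 <= P E)%E by exact: measure_ge0.
move: hE0 hle; rewrite /E; case: (P _) => [r| |] h0 hl.
- congr (_%:E); apply: le_anti; apply/andP; split; last by rewrite -lee_fin.
  rewrite leNgt.
  apply/negP => r0.
  have [M hM] := @exists_pow_lt R (1 - p) r (ltac:(apply/andP; split; lra)) r0.
  by have := hl M; rewrite lee_fin leNgt hM.
- by have := hl 0%N.
- by [].
Qed.
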